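(* Let $\mathcal{N}=(Q,\Sigma,\Delta,q_0,F)$ be a one-counter net. If Eve wins the letter game on $\mathcal{N}$, then she has a winning strategy in the letter game that depends only on the current configuration and the letter chosen by Adam, i.e. given by a partial function $\sigma:(Q\times\mathbb{N})\times\Sigma\to\Delta$.
   Context: A one-counter net (OCN) is $\mathcal{N}=(Q,\Sigma,\Delta,q_0,F)$ with $Q$ finite, $\Sigma$ finite, $q_0\in Q$, $F\subseteq Q$, $\Delta\subseteq Q\times\Sigma\times\{-1,0,1\}\times Q$; configurations $(q,n)\in Q\times\mathbb{N}$, step $(q,n)\xrightarrow{a,d}(p,n+d)$ if $(q,a,d,p)\in\Delta$ and $n+d\ge0$; runs start at $(q_0,0)$ and are accepting if the last state is in $F$; $\mathcal{L}(\mathcal{N})$ is the set of words with an accepting run. Letter game: positions $(c,w)$, start $((q_0,0),\varepsilon)$; each round Adam picks $a\in\Sigma$, Eve picks a step $c\xrightarrow{a,d}c'$; if Eve has none and $wa$ is a prefix of a word of $\mathcal{L}(\mathcal{N})$ she loses; if $wa\in\mathcal{L}(\mathcal{N})$ but the state of $c'$ is not in $F$, Adam wins; otherwise continue from $(c',wa)$; Eve wins infinite plays. *)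

(* Defs.v *)
From mathcomp Require Import all_boot all_order all_algebra.
Set Implicit Arguments. Unset Strict Implicit. Unset Printing Implicit Defensive.
Import GRing.Theory Num.Theory.

Inductive eff := Dm | D0 | Dp.

Definition eff_val (d : eff) : int :=
  match d with Dm => (-1)%R | D0 => 0%R | Dp => 1%R end.

Record OCN (Q Sigma : finType) := MkOCN {
  delta : Q -> Sigma -> eff -> Q -> bool;
  q0 : Q;
  final : {set Q}
}.

Section OCNDefs.
Variables (Q Sigma : finType) (N : OCN Q Sigma).

Definition conf := (Q * nat)%type.
Definition trans := (Q * Sigma * eff * Q)%type.

(* c --a,d--> c' using transition t = (q,a,d,p) in Delta, with n + d >= 0 *)
Definition step (c : conf) (a : Sigma) (t : trans) (c' : conf) : Prop :=
  match t with (q, b, d, p) =>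
    [/\ q = c.1, b = a, delta N q b d p, c'.1 = p &
        (Posz c'.2 = Posz c.2 + eff_val d)%R]
  end.

Inductive reaches : conf -> seq Sigma -> conf -> Prop :=
| reaches_nil c : reaches c [::] c
| reaches_cons c a t c' w c'' :
    step c a t c' -> reaches c' w c'' -> reaches c (a :: w) c''.

Definition init_conf : conf := (q0 N, 0).

Definition lang (w : seq Sigma) : Prop :=
  exists c, reaches init_conf w c /\ c.1 \in final N.

Definition is_prefix_of_lang (w : seq Sigma) : Prop :=
  exists v, lang (w ++ v).

(* Positions of the letter game: (configuration, word read so far). *)
Definition position := (conf * seq Sigma)%type.

(* General (history-dependent) strategy of Eve: given the history of previous
   positions, the current position and Adam's letter, she (partially) picks a
   transition. *)
Definition strategy := seq position -> position -> Sigma -> option trans.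

Definition pos_strategy := conf -> Sigma -> option trans.

Definition lift_pos (s : pos_strategy) : strategy :=
  fun _ pos a => s pos.1 a.

Inductive outcome :=
| Cont of seq position & position
| EveWon
| AdamWon.

Definition valid_choice (c : conf) (a : Sigma) (o : option trans) (c' : conf) :=
  exists t, o = Some t /\ step c a t c'.

Inductive round (s : strategy) (a : Sigma) : outcome -> outcome -> Prop :=
| round_adam_acc h c w c' :
    valid_choice c a (s h (c, w) a) c' ->
    lang (rcons w a) -> c'.1 \notin final N ->
    round s a (Cont h (c, w)) AdamWon
| round_cont h c w c' :
    valid_choice c a (s h (c, w) a) c' ->
    ~ (lang (rcons w a) /\ c'.1 \notin final N) ->
    round s a (Cont h (c, w)) (Cont (rcons h (c, w)) (c', rcons w a))
| round_illegal h c w :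
    (forall c', ~ valid_choice c a (s h (c, w) a) c') ->
    (exists t c', step c a t c') ->
    round s a (Cont h (c, w)) AdamWon
| round_stuck_lose h c w :
    (forall c', ~ valid_choice c a (s h (c, w) a) c') ->
    ~ (exists t c', step c a t c') ->
    is_prefix_of_lang (rcons w a) ->
    round s a (Cont h (c, w)) AdamWon
| round_stuck_win h c w :
    (forall c', ~ valid_choice c a (s h (c, w) a) c') ->
    ~ (exists t c', step c a t c') ->
    ~ is_prefix_of_lang (rcons w a) ->
    round s a (Cont h (c, w)) EveWon
| round_eve : round s a EveWon EveWon
| round_adam : round s a AdamWon AdamWon.

Definition is_play (s : strategy) (alpha : nat -> Sigma) (o : nat -> outcome) :=
  o 0 = Cont [::] (init_conf, [::]) /\
  forall n, round s (alpha n) (o n) (o n.+1).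

Definition winning (s : strategy) : Prop :=
  forall alpha o, is_play s alpha o -> forall n, o n <> AdamWon.

Definition eve_wins_letter_game : Prop := exists s, winning s.

End OCNDefs.

(* Main.v *)
Require Import Defs.
From mathcomp Require Import all_boot all_order all_algebra.
From Stdlib Require Import Classical ClassicalEpsilon.
Set Implicit Arguments. Unset Strict Implicit. Unset Printing Implicit Defensive.

Lemma valid_det (Q Sigma : finType) (N : OCN Q Sigma) c a o c1 c2 :
  valid_choice N c a o c1 -> valid_choice N c a o c2 -> c1 = c2.
Proof.
move=> [t1 [-> H1]] [t2 [[<-] H2]].
move: H1 H2; case: t1 => [[[q b] d] p] /= [_ _ _ E1 F1] [_ _ _ E2 F2].
case: c1 c2 E1 F1 E2 F2 => [x1 y1] [x2 y2] /= -> F1 -> F2.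
by rewrite -F2 in F1; case: F1 => ->.
Qed.

Lemma reaches_rcons (Q Sigma : finType) (N : OCN Q Sigma) c w c1 a t c2 :
  reaches N c w c1 -> step N c1 a t c2 -> reaches N c (rcons w a) c2.
Proof.
elim=> [c0|c0 b t0 c' w0 c'' S R IH] St /=.
  by apply: reaches_cons St (reaches_nil _ _).
by apply: reaches_cons S (IH St).
Qed.

Lemma reaches_cat (Q Sigma : finType) (N : OCN Q Sigma) c w c1 u c2 :
  reaches N c w c1 -> reaches N c1 u c2 -> reaches N c (w ++ u) c2.
Proof.
elim=> [c0|c0 b t0 c' w0 c'' S R IH] R2 //=.
by apply: reaches_cons S (IH R2).
Qed.

Lemma reaches_nil_inv (Q Sigma : finType) (N : OCN Q Sigma) c c' :
  reaches N c [::] c' -> c' = c.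
Proof. by inversion 1. Qed.

Definition Inv (Q Sigma : finType) (N : OCN Q Sigma) (o : outcome Q Sigma) :=
  match o with
  | Cont h (c, w) => reaches N (init_conf N) w c /\ (lang N w -> c.1 \in final N)
  | _ => True
  end.

Lemma Inv_round (Q Sigma : finType) (N : OCN Q Sigma) s a o o' :
  round N s a o o' -> Inv N o -> Inv N o'.
Proof.
case=> //= h c w c' [t [_ St]] NL [R _]; split.
  exact: reaches_rcons R St.
move=> L; case: (boolP (c'.1 \in final N)) => // F.
by exfalso; apply: NL.
Qed.

Lemma Inv_play (Q Sigma : finType) (N : OCN Q Sigma) s alpha o :
  is_play N s alpha o -> forall n, Inv N (o n).
Proof.
move=> [H0 HS]; elim=> [|n IH]; last exact: Inv_round (HS n) IH.
rewrite H0 /=; split; first exact: reaches_nil.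
by move=> [c [/reaches_nil_inv -> F]].
Qed.

Lemma round_total (Q Sigma : finType) (N : OCN Q Sigma) s a o :
  exists o', round N s a o o'.
Proof.
case: o => [h [c w]||]; last 2 first.
- by exists (EveWon Q Sigma); constructor.
- by exists (AdamWon Q Sigma); constructor.
case: (classic (exists c', valid_choice N c a (s h (c, w) a) c')) => [[c' V]|NV].
  case: (classic (lang N (rcons w a) /\ c'.1 \notin final N)) => [[L F]|NL].
    by exists (AdamWon Q Sigma); apply: round_adam_acc V L F.
  by eexists; apply: round_cont V NL.
have NV' : forall c', ~ valid_choice N c a (s h (c, w) a) c' by move=> c' V; apply: NV; exists c'.
case: (classic (exists t c', step N c a t c')) => [E|NE].
  by exists (AdamWon Q Sigma); apply: round_illegal.
case: (classic (is_prefix_of_lang N (rcons w a))) => [P|NP].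
  by exists (AdamWon Q Sigma); apply: round_stuck_lose.
by exists (EveWon Q Sigma); apply: round_stuck_win.
Qed.

Definition next (Q Sigma : finType) (N : OCN Q Sigma) s (o : outcome Q Sigma) a :=
  proj1_sig (constructive_indefinite_description _ (round_total N s a o)).

Lemma nextP (Q Sigma : finType) (N : OCN Q Sigma) s o a : round N s a o (next N s o a).
Proof. exact: proj2_sig (constructive_indefinite_description _ (round_total N s a o)). Qed.

Fixpoint canon (Q Sigma : finType) (N : OCN Q Sigma) s (alpha : nat -> Sigma) n :=
  match n with
  | 0 => Cont [::] (init_conf N, [::])
  | n.+1 => next N s (canon N s alpha n) (alpha n)
  end.

Lemma canon_play (Q Sigma : finType) (N : OCN Q Sigma) s alpha :
  is_play N s alpha (canon N s alpha).
Proof. by split=> // n; apply: nextP. Qed.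

Lemma canon_agree (Q Sigma : finType) (N : OCN Q Sigma) s alpha beta n :
  (forall k, k < n -> alpha k = beta k) ->
  forall m, m <= n -> canon N s alpha m = canon N s beta m.
Proof.
move=> E; elim=> [|m IH] //= Hm.
by rewrite IH ?(ltnW Hm) // E.
Qed.

Definition ReachH (Q Sigma : finType) (N : OCN Q Sigma) s h (p : position Q Sigma) :=
  exists alpha n, canon N s alpha n = Cont h p.

Definition Lc (Q Sigma : finType) (N : OCN Q Sigma) (c : conf Q) (u : seq Sigma) :=
  exists c'', reaches N c u c'' /\ c''.1 \in final N.

Lemma key (Q Sigma : finType) (N : OCN Q Sigma) s h c w :
  winning N s -> ReachH N s h (c, w) ->
  forall u, lang N (w ++ u) <-> Lc N c u.
Proof.
move=> Ws [alpha [n Hn]] u; split; last first.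
  move=> [c'' [R F]]; exists c''; split => //.
  have := Inv_play (canon_play N s alpha) n; rewrite Hn => -[R0 _].
  exact: reaches_cat R0 R.
move=> L.
pose alpha' k := if k < n then alpha k else nth (alpha 0) u (k - n).
have Ag : canon N s alpha' n = Cont h (c, w).
  by rewrite -Hn; apply/esym/(@canon_agree _ _ _ _ _ _ n) => // k kn; rewrite /alpha' kn.
suff: forall i, i <= size u -> exists h' c',
    canon N s alpha' (n + i) = Cont h' (c', w ++ take i u) /\ reaches N c (take i u) c'.
  move=> /(_ (size u) (leqnn _)) [h' [c' [E R]]].
  exists c'; rewrite take_size in E R; split => //.
  have := Inv_play (canon_play N s alpha') (n + size u); rewrite E => -[_].
  by apply.
elim=> [|i IH] Hi.
  by exists h, c; rewrite addn0 take0 cats0; split => //; apply: reaches_nil.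
have [h' [c' [E R]]] := IH (ltnW Hi).
have Rd := nextP N s (canon N s alpha' (n + i)) (alpha' (n + i)).
have Al : alpha' (n + i) = nth (alpha 0) u i.
  by rewrite /alpha' ltnNge leq_addr /= addKn.
rewrite E Al in Rd.
have NA := Ws _ _ (canon_play N s alpha') (n + i).+1.
rewrite addnS /=; move: NA; rewrite /= E Al.
inversion Rd; subst => NA; try by [].
- exists (rcons h' (c', w ++ take i u)), c'0; split.
    by rewrite (take_nth (alpha 0) Hi) rcons_cat.
  match goal with H : valid_choice _ _ _ _ _ |- _ => move: H => [t [_ St]] end.
  by rewrite (take_nth (alpha 0) Hi); apply: reaches_rcons R St.
- exfalso; apply: H5; exists (drop i.+1 u).
  by rewrite rcons_cat -take_nth // -catA cat_take_drop.
Qed.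

Definition Reach1 (Q Sigma : finType) (N : OCN Q Sigma) s (c : conf Q) :=
  exists hw : seq (position Q Sigma) * seq Sigma, ReachH N s hw.1 (c, hw.2).

Definition rep (Q Sigma : finType) (N : OCN Q Sigma) s (c : conf Q) :
  seq (position Q Sigma) * seq Sigma :=
  match excluded_middle_informative (Reach1 N s c) with
  | left H => proj1_sig (constructive_indefinite_description _ H)
  | right _ => ([::], [::])
  end.

Lemma rep_spec (Q Sigma : finType) (N : OCN Q Sigma) s c :
  Reach1 N s c -> ReachH N s (rep N s c).1 (c, (rep N s c).2).
Proof.
rewrite /rep; case: excluded_middle_informative => // H _.
exact: proj2_sig (constructive_indefinite_description _ H).
Qed.

Definition psig (Q Sigma : finType) (N : OCN Q Sigma) s : pos_strategy Q Sigma :=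
  fun c a => s (rep N s c).1 (c, (rep N s c).2) a.

Definition SInv (Q Sigma : finType) (N : OCN Q Sigma) s (o : outcome Q Sigma) :=
  match o with
  | EveWon => True
  | AdamWon => False
  | Cont h (c, w) => Reach1 N s c /\ forall u, lang N (w ++ u) <-> Lc N c u
  end.

Lemma SInv_round (Q Sigma : finType) (N : OCN Q Sigma) s a o o' :
  winning N s -> SInv N s o -> round N (lift_pos (psig N s)) a o o' -> SInv N s o'.
Proof.
move=> Ws; case: o => [h [c w]||] //=; last by move=> _; inversion 1.
move=> [R1 Res].
have := rep_spec R1; set hc := (rep N s c).1; set wc := (rep N s c).2.
move=> [alpha0 [n0 H0]].
have Ch : lift_pos (psig N s) h (c, w) a = s hc (c, wc) a by [].
clearbody hc wc.
pose alpha1 k := if k < n0 then alpha0 k else a.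
have Ag : canon N s alpha1 n0 = Cont hc (c, wc).
  by rewrite -H0; apply/esym/(@canon_agree _ _ _ _ _ _ n0) => // k kn; rewrite /alpha1 kn.
have Al : alpha1 n0 = a by rewrite /alpha1 ltnn.
have Rs : round N s a (Cont hc (c, wc)) (canon N s alpha1 n0.+1).
  by rewrite /= Ag Al; apply: nextP.
have NA := Ws _ _ (canon_play N s alpha1) n0.+1.
have KeyC := key Ws (ex_intro _ alpha0 (ex_intro _ n0 H0)).
have ResA : forall u, lang N (rcons w a ++ u) <-> lang N (rcons wc a ++ u).
  move=> u; rewrite !cat_rcons; split => L.
    by apply/KeyC/Res.
  by apply/Res/KeyC.
have SF : (exists c', valid_choice N c a (s hc (c, wc) a) c' /\
           ~ (lang N (rcons wc a) /\ c'.1 \notin final N) /\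
           ReachH N s (rcons hc (c, wc)) (c', rcons wc a)) \/
          ((forall c', ~ valid_choice N c a (s hc (c, wc) a) c') /\
           ~ (exists t c', step N c a t c') /\ ~ is_prefix_of_lang N (rcons wc a)).
  remember (canon N s alpha1 n0.+1) as X eqn:EX.
  inversion Rs; try (by exfalso; apply: NA; congruence).
    left; exists c'; split => //; split => //.
    by exists alpha1, n0.+1; rewrite -EX; symmetry.
  by right.
clear Ag Al Rs NA alpha1 KeyC.
move=> Rd; inversion Rd; subst. all: try match goal with H : context [lift_pos _ _ _ _] |- _ => rewrite Ch in H end.
- match goal with H : valid_choice _ _ _ _ _ |- _ => rename H into V end.
  case: SF => [[c2 [V2 [NL _]]]|[NV _]]; last by case: (NV _ V).
  have E := valid_det V V2; subst c2.
  apply: NL; split => //.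
  by have := (ResA [::]); rewrite !cats0 => /iffLR; apply.
- match goal with H : valid_choice _ _ _ _ _ |- _ => rename H into V end.
  case: SF => [[c2 [V2 [NL RH]]]|[NV _]]; last by case: (NV _ V).
  have E := valid_det V V2; subst c2.
  split; first by exists (rcons hc (c, wc), rcons wc a).
  move=> u; rewrite ResA; exact: key Ws RH u.
- match goal with H : forall c', ~ valid_choice _ _ _ _ _ |- _ => rename H into V end.
  case: SF => [[c2 [V2 _]]|[_ [NE _]]]; first by case: (V _ V2).
  by [].
- match goal with H : forall c', ~ valid_choice _ _ _ _ _ |- _ => rename H into V end.
  match goal with H : is_prefix_of_lang _ _ |- _ => rename H into P end.
  case: SF => [[c2 [V2 _]]|[_ [_ NP]]]; first by case: (V _ V2).
  apply: NP; move: P => [v L]; exists v; exact/ResA.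
- by [].
Qed.

Theorem proposition2 (Q Sigma : finType) (N : OCN Q Sigma) :
  eve_wins_letter_game N ->
  exists sigma : pos_strategy Q Sigma, winning N (lift_pos sigma).
Proof.
move=> [s Ws]; exists (psig N s) => alpha o [H0 HS].
suff I : forall n, SInv N s (o n).
  by move=> n E; have := I n; rewrite E.
elim=> [|n IH]; last exact: SInv_round Ws IH (HS n).
rewrite H0 /=; split.
  by exists ([::], [::]); exists alpha, 0.
by [].
Qed.
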